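(* Assume $F$ is $K$-smooth with $\ell\in\mathrm{int}(K)$ and strongly $K$-convex with $\mu\in\mathrm{int}(K)$. Let $C_\ell:=\{c^*\in K^*:\langle c^*,\ell\rangle=1\}$ and let $\{x^k\}$ be generated from $x^0$ by $$x^{k+1}:=\arg\min_{x\in\mathbb{R}^n}\max_{c^*\in C_\ell}\langle c^*,JF(x^k)(x-x^k)\rangle+\tfrac12\|x-x^k\|^2,$$ assumed not to terminate ($x^{k+1}\ne x^k$ for all $k$). Then: (i) $\{x^k\}$ converges to an efficient solution $x^*$ of $\min_K F(x)$; (ii) $\|x^{k+1}-x^*\|\le\sqrt{1-1/\kappa_{F,\preceq_K}}\,\|x^k-x^*\|$ for all $k\ge0$, where $\kappa_{F,\preceq_K}:=\max_{c^*\in K^*\setminus\{0\}}\frac{\langle c^*,\ell\rangle}{\langle c^*,\mu\rangle}$.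
   Context: $K\subset\mathbb{R}^m$ closed convex pointed cone with nonempty interior; $y\preceq_K y'$ iff $y'-y\in K$. $K^*=\{c:\langle c,y\rangle\ge0\ \forall y\in K\}$. $F:\mathbb{R}^n\to\mathbb{R}^m$ differentiable with Jacobian $JF$. Strongly $K$-convex with $\mu\in K$: $JF(x)(y-x)+\tfrac12\|y-x\|^2\mu\preceq_K F(y)-F(x)$ $\forall x,y$. $K$-smooth with $\ell\in K$: $F(y)-F(x)\preceq_K JF(x)(y-x)+\tfrac12\|y-x\|^2\ell$ $\forall x,y$. $x^*$ is efficient if there is no $x$ with $F(x)\preceq_K F(x^* )$ and $F(x)\neq F(x^* )$. *)

(* Defs.v *)
From HB Require Import structures.
From mathcomp Require Import all_boot all_order all_algebra.
From mathcomp Require Import all_classical all_reals all_analysis.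
Set Implicit Arguments. Unset Strict Implicit. Unset Printing Implicit Defensive.
Import Order.TTheory GRing.Theory Num.Theory.
Import numFieldNormedType.Exports.
Local Open Scope classical_set_scope.
Local Open Scope ring_scope.

Section Defs.
Variable R : realType.

Definition dotv (k : nat) (u v : 'rV[R]_k) : R := \sum_(i < k) u ord0 i * v ord0 i.
Definition enorm (k : nat) (u : 'rV[R]_k) : R := Num.sqrt (dotv u u).

Definition is_cone (m : nat) (K : set 'rV[R]_m) : Prop :=
  forall y t, K y -> 0 <= t -> K (t *: y).
Definition is_convex_set (m : nat) (K : set 'rV[R]_m) : Prop :=
  forall x y t, K x -> K y -> 0 <= t <= 1 -> K (t *: x + (1 - t) *: y).
Definition is_pointed (m : nat) (K : set 'rV[R]_m) : Prop :=
  forall y, K y -> K (- y) -> y = 0.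

Definition coneLe (m : nat) (K : set 'rV[R]_m) (y y' : 'rV[R]_m) : Prop := K (y' - y).

Definition dual_cone (m : nat) (K : set 'rV[R]_m) : set 'rV[R]_m :=
  [set c | forall y, K y -> 0 <= dotv c y].

Definition Jac (n m : nat) (F : 'rV[R]_n -> 'rV[R]_m) (x v : 'rV[R]_n) : 'rV[R]_m :=
  'd F x v.

Definition strongly_K_convex (n m : nat) (K : set 'rV[R]_m)
  (F : 'rV[R]_n -> 'rV[R]_m) (mu : 'rV[R]_m) : Prop :=
  forall x y, coneLe K (Jac F x (y - x) + (2^-1 * enorm (y - x) ^+ 2) *: mu) (F y - F x).

Definition K_smooth (n m : nat) (K : set 'rV[R]_m)
  (F : 'rV[R]_n -> 'rV[R]_m) (ell : 'rV[R]_m) : Prop :=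
  forall x y, coneLe K (F y - F x) (Jac F x (y - x) + (2^-1 * enorm (y - x) ^+ 2) *: ell).

Definition efficient (n m : nat) (K : set 'rV[R]_m)
  (F : 'rV[R]_n -> 'rV[R]_m) (xs : 'rV[R]_n) : Prop :=
  ~ exists x, coneLe K (F x) (F xs) /\ F x <> F xs.

Definition C_ell (m : nat) (K : set 'rV[R]_m) (ell : 'rV[R]_m) : set 'rV[R]_m :=
  [set c | dual_cone K c /\ dotv c ell = 1].

(* subproblem objective: max_{c in C_ell} <c, JF(xk)(x - xk)> + 1/2 |x - xk|^2
   (the max is attained, so it is written as a sup) *)
Definition subprob_obj (n m : nat) (K : set 'rV[R]_m) (ell : 'rV[R]_m)
  (F : 'rV[R]_n -> 'rV[R]_m) (xk x : 'rV[R]_n) : R :=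
  sup [set dotv c (Jac F xk (x - xk)) | c in C_ell K ell]
  + 2^-1 * enorm (x - xk) ^+ 2.

Definition is_argmin (n : nat) (f : 'rV[R]_n -> R) (z : 'rV[R]_n) : Prop :=
  forall x, f z <= f x.

(* kappa = max_{c in K^* \ {0}} <c,ell>/<c,mu> (attained; written as a sup) *)
Definition kappa (m : nat) (K : set 'rV[R]_m) (ell mu : 'rV[R]_m) : R :=
  sup [set dotv c ell / dotv c mu | c in dual_cone K `\ 0].

End Defs.

(* Main.v *)
Require Import Defs.
From HB Require Import structures.
From mathcomp Require Import all_boot all_order all_algebra.
From mathcomp Require Import all_classical all_reals all_analysis.
From mathcomp Require Import ring lra.
Set Implicit Arguments. Unset Strict Implicit. Unset Printing Implicit Defensive.
Import Order.TTheory GRing.Theory Num.Theory.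
Import numFieldNormedType.Exports.
Local Open Scope classical_set_scope.
Local Open Scope ring_scope.
Section Basic.
Variable R : realType.
Variable k : nat.
Implicit Types (u v w c : 'rV[R]_k).

Lemma dotvC u v : dotv u v = dotv v u.
Proof. by rewrite /dotv; apply: eq_bigr => i _; rewrite mulrC. Qed.
Lemma dotvDr u v w : dotv u (v + w) = dotv u v + dotv u w.
Proof. by rewrite /dotv -big_split; apply: eq_bigr => i _; rewrite !mxE mulrDr. Qed.
Lemma dotvDl u v w : dotv (v + w) u = dotv v u + dotv w u.
Proof. by rewrite dotvC dotvDr !(dotvC u). Qed.
Lemma dotvZr a u v : dotv u (a *: v) = a * dotv u v.
Proof. by rewrite /dotv mulr_sumr; apply: eq_bigr => i _; rewrite !mxE mulrCA. Qed.
Lemma dotvZl a u v : dotv (a *: v) u = a * dotv v u.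
Proof. by rewrite dotvC dotvZr dotvC. Qed.
Lemma dotvNr u v : dotv u (- v) = - dotv u v.
Proof. by rewrite -scaleN1r dotvZr mulN1r. Qed.
Lemma dotvNl u v : dotv (- v) u = - dotv v u.
Proof. by rewrite dotvC dotvNr dotvC. Qed.
Lemma dotvBr u v w : dotv u (v - w) = dotv u v - dotv u w.
Proof. by rewrite dotvDr dotvNr. Qed.
Lemma dotvBl u v w : dotv (v - w) u = dotv v u - dotv w u.
Proof. by rewrite dotvDl dotvNl. Qed.
Lemma dotv0r u : dotv u 0 = 0.
Proof. by rewrite /dotv big1 // => i _; rewrite mxE mulr0. Qed.
Lemma dotv0l u : dotv 0 u = 0.
Proof. by rewrite dotvC dotv0r. Qed.
Lemma dotv_ge0 u : 0 <= dotv u u.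
Proof. by rewrite /dotv sumr_ge0 // => i _; rewrite -expr2 sqr_ge0. Qed.
Lemma dotv_eq0 u : dotv u u = 0 -> u = 0.
Proof.
move=> h; apply/rowP => i; rewrite mxE.
have h2 : \sum_(j < k) u ord0 j ^+ 2 = 0.
  by rewrite -[RHS]h /dotv; apply: eq_bigr => j _; rewrite expr2.
have := psumr_eq0P (fun j _ => sqr_ge0 (u ord0 j)) h2 (i:=i) isT.
move/eqP; rewrite sqrf_eq0 => /eqP.
by [].
Qed.
Lemma enorm_sq u : enorm u ^+ 2 = dotv u u.
Proof. by rewrite /enorm sqr_sqrtr // dotv_ge0. Qed.
Lemma enorm_ge0 u : 0 <= enorm u.
Proof. exact: sqrtr_ge0. Qed.
Lemma dotv_opp u : dotv (- u) (- u) = dotv u u.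
Proof. by rewrite dotvNl dotvNr opprK. Qed.
Lemma enorm0 : enorm (0 : 'rV[R]_k) = 0.
Proof. by rewrite /enorm dotv0r sqrtr0. Qed.

Lemma dotv_CS u v : dotv u v <= enorm u * enorm v.
Proof.
have h := dotv_ge0 (enorm v *: u - enorm u *: v).
rewrite dotvBl !dotvBr !dotvZl !dotvZr -!enorm_sq (dotvC v u) in h.
have hu := enorm_ge0 u; have hv := enorm_ge0 v.
have [uv0|uvp] := eqVneq (enorm u * enorm v) 0.
  move: uv0 => /eqP; rewrite mulf_eq0 => /orP[] /eqP e0.
  - have : u = 0 by apply: dotv_eq0; rewrite -enorm_sq e0 expr0n.
    by move=> ->; rewrite dotv0l enorm0 mul0r.
  - have : v = 0 by apply: dotv_eq0; rewrite -enorm_sq e0 expr0n.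
    by move=> ->; rewrite dotv0r enorm0 mulr0.
have p : 0 < enorm u * enorm v by rewrite lt0r uvp mulr_ge0.
nra.
Qed.

Lemma enorm_triangle u v : enorm (u + v) <= enorm u + enorm v.
Proof.
rewrite -(@ler_pXn2r _ 2) //; last 2 first.
- by rewrite nnegrE enorm_ge0.
- by rewrite nnegrE addr_ge0 // enorm_ge0.
rewrite enorm_sq dotvDl !dotvDr -!enorm_sq (dotvC v u).
have := dotv_CS u v; nra.
Qed.

Definition S1 u := \sum_i `|u ord0 i|.
Lemma S1_ge0 u : 0 <= S1 u.
Proof. by rewrite /S1 sumr_ge0. Qed.
Lemma entry_le_S1 u i : `|u ord0 i| <= S1 u.
Proof.
rewrite /S1 (bigD1 i) //= lerDl sumr_ge0 //.
Qed.
Lemma dotv_S1 u v : `|dotv u v| <= S1 u * S1 v.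
Proof.
rewrite /dotv (le_trans (ler_norm_sum _ _ _)) // /S1 mulr_suml.
apply: ler_sum => i _; rewrite normrM ler_wpM2l //.
exact: entry_le_S1.
Qed.
Lemma S1_eq0 u : S1 u = 0 -> u = 0.
Proof.
move=> h; apply/rowP => i; rewrite mxE.
have := psumr_eq0P (fun j _ => normr_ge0 (u ord0 j)) h (i:=i) isT.
by move/eqP; rewrite normr_eq0 => /eqP.
Qed.
Lemma norm_le_enorm u : `|u| <= enorm u.
Proof.
rewrite [X in X <= _]/Num.Def.normr /= mx_normrE; apply: bigmax_le => //.
  exact: enorm_ge0.
move=> [i j] _ /=.
rewrite -sqrtr_sqr /enorm ler_wsqrtr // /dotv (bigD1 j) //= -expr2.
rewrite (_ : i = ord0); last by apply: val_inj; case: i => -[].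
by rewrite lerDl sumr_ge0 // => l _; rewrite -expr2 sqr_ge0.
Qed.
Lemma S1_le_norm u : S1 u <= k%:R * `|u|.
Proof.
rewrite /S1 (@le_trans _ _ (\sum_(i < k) `|u|)) //; last first.
  by rewrite sumr_const card_ord mulr_natl.
apply: ler_sum => i _.
rewrite [X in _ <= X]/Num.Def.normr /= mx_normrE.
by apply/bigmax_geP; right; exists (ord0, i).
Qed.
End Basic.
Section Int.
Variable R : realType.
Variable k : nat.

Lemma interior_bound (K : set 'rV[R]_k) mu : interior K mu ->
  exists2 r : R, 0 < r & forall c, dual_cone K c -> r * S1 c <= dotv c mu.
Proof.
move=> /nbhs_ballP [e e0 he].
exists (e / 2); first by rewrite divr_gt0.
move=> c Kc.
pose s : 'rV[R]_k := \row_i Num.sg (c ord0 i).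
have hs : `|s| <= 1.
  rewrite [X in X <= _]/Num.Def.normr /= mx_normrE; apply: bigmax_le => //.
  move=> [i j] _ /=; rewrite mxE normr_sg; by case: (_ != 0).
have Ky : K (mu - (e / 2) *: s).
  apply: he; rewrite -ball_normE /ball_ /= opprB addrC subrK.
  rewrite normrZ gtr0_norm ?divr_gt0 //.
  rewrite (le_lt_trans (ler_wpM2l _ hs)) ?mulr1 ?ltr_pdivrMr ?ltr_pMr ?ltr1n //.
  by rewrite ltW // divr_gt0.
have := Kc _ Ky; rewrite dotvBr dotvZr.
have -> : dotv c s = S1 c.
  by rewrite /dotv /S1; apply: eq_bigr => i _; rewrite mxE normrEsg mulrC.
by rewrite subr_ge0.
Qed.
End Int.
Lemma real_lim_arg (R : realType) (D B : R) :
  (forall t, 0 < t <= 1 -> 0 <= t * D + t ^+ 2 * B) -> 0 <= B -> 0 <= D.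
Proof.
move=> h hB; rewrite leNgt; apply/negP => hD.
pose u := B - D.
have hu : 0 < u by rewrite /u; lra.
pose t := - D / u.
have ht : t * u = - D by rewrite /t divfK // gt_eqF.
have t0 : 0 < t by rewrite /t divr_gt0 // oppr_gt0.
have t1 : t <= 1 by rewrite /t ler_pdivrMr // mul1r /u; lra.
have := h t; rewrite t0 t1 => /(_ isT) H.
have H2 : 0 <= D + t * B.
  by rewrite -(pmulr_rge0 _ t0) mulrDr mulrA -expr2.
have : 0 <= u * (D + t * B) by rewrite mulr_ge0 // ltW.
rewrite mulrDr (mulrC u (t * B)) -mulrA (mulrC B u) mulrA ht /u.
nra.
Qed.

Section Step.
Variable R : realType.
Variables n m : nat.
Variable K : set 'rV[R]_m.
Variable F : 'rV[R]_n -> 'rV[R]_m.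
Variables ell mu : 'rV[R]_m.

Definition gfun xk v := sup [set dotv c (Jac F xk v) | c in C_ell K ell].

Lemma phiE xk y : subprob_obj K ell F xk y = gfun xk (y - xk) + 2^-1 * dotv (y - xk) (y - xk).
Proof. by rewrite /subprob_obj /gfun enorm_sq. Qed.

Lemma Jac_lin xk a b t : Jac F xk (a + t *: b) = Jac F xk a + t *: Jac F xk b.
Proof. by rewrite /Jac linearD linearZ. Qed.

Lemma Jac0 xk : Jac F xk 0 = 0.
Proof. by rewrite /Jac linear0. Qed.

Variable c0 : 'rV[R]_m.
Hypothesis Cc0 : C_ell K ell c0.
Variable M : R.
Hypothesis hM : forall c, C_ell K ell c -> S1 c <= M.

Lemma g_ub xk v c : C_ell K ell c -> dotv c (Jac F xk v) <= gfun xk v.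
Proof.
move=> Cc; apply: ub_le_sup; last by exists c.
exists (M * S1 (Jac F xk v)) => y [c' Cc' <-].
apply: (le_trans (ler_norm _)); apply: (le_trans (dotv_S1 _ _)).
by rewrite ler_wpM2r // ?S1_ge0 // hM.
Qed.

Lemma g_lub xk v b : (forall c, C_ell K ell c -> dotv c (Jac F xk v) <= b) ->
  gfun xk v <= b.
Proof.
move=> h; apply: ge_sup; first by exists (dotv c0 (Jac F xk v)), c0.
by move=> y [c Cc <-]; exact: h.
Qed.

Lemma g0 xk : gfun xk 0 = 0.
Proof.
apply/eqP; rewrite eq_le; apply/andP; split.
  by apply: g_lub => c _; rewrite Jac0 dotv0r.
by have := g_ub xk 0 Cc0; rewrite Jac0 dotv0r.
Qed.

Lemma g_convex xk a b t : 0 <= t <= 1 ->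
  gfun xk (a + t *: b) <= (1 - t) * gfun xk a + t * gfun xk (a + b).
Proof.
move=> /andP[t0 t1]; apply: g_lub => c Cc.
rewrite Jac_lin dotvDr dotvZr.
have ha := g_ub xk a Cc; have hb := g_ub xk (a + b) Cc.
rewrite -(scale1r b) Jac_lin dotvDr dotvZr mul1r scale1r in hb.
nra.
Qed.

Lemma dotv_sq_add (k : nat) (a b : 'rV[R]_k) t :
  dotv (a + t *: b) (a + t *: b) = dotv a a + 2 * t * dotv a b + t ^+ 2 * dotv b b.
Proof. rewrite !dotvDl !dotvDr !dotvZl !dotvZr (dotvC b a); ring. Qed.

Lemma phi_strong xk z : is_argmin (subprob_obj K ell F xk) z ->
  forall y, subprob_obj K ell F xk z + 2^-1 * dotv (y - z) (y - z)
            <= subprob_obj K ell F xk y.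
Proof.
move=> hz y; rewrite !phiE.
have hyab : y - xk = (z - xk) + 1 *: (y - z) by rewrite scale1r [RHS]addrC addrA subrK.
have hw : forall t, z + t *: (y - z) - xk = (z - xk) + t *: (y - z).
  by move=> t; rewrite addrAC.
have key : forall t, 0 <= t <= 1 ->
  gfun xk (z - xk) + 2^-1 * dotv (z - xk) (z - xk) <=
  gfun xk ((z - xk) + t *: (y - z)) + 2^-1 * dotv ((z - xk) + t *: (y - z)) ((z - xk) + t *: (y - z)).
  by move=> t _; have := hz (z + t *: (y - z)); rewrite !phiE hw.
rewrite hyab; move: key (g_convex xk (z - xk) (y - z)); clear hyab hw hz.
move: (z - xk) (y - z) => a b key conv.
rewrite dotv_sq_add expr1n mulr1 mul1r scale1r.
set D := gfun xk (a + b) - gfun xk a + dotv a b.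
suff : 0 <= D by rewrite /D => hD; lra.
apply: (@real_lim_arg _ _ (2^-1 * dotv b b)); last first.
  by rewrite mulr_ge0 // dotv_ge0.
move=> t /andP[t0 t1].
have ht : 0 <= t <= 1 by rewrite ltW.
have := key t ht; have := conv t ht.
rewrite dotv_sq_add /D; nra.
Qed.
Hypothesis hs : K_smooth K F ell.
Hypothesis hsc : strongly_K_convex K F mu.

Lemma step_mono xk z : is_argmin (subprob_obj K ell F xk) z ->
  forall c, C_ell K ell c -> dotv c (F z) <= dotv c (F xk).
Proof.
move=> hz c [Kc c1].
have := Kc _ (hs xk z); rewrite /coneLe !dotvBr dotvDr dotvZr c1 mulr1 enorm_sq.
have := hz xk; rewrite !phiE subrr g0 dotv0r mulr0 addr0.
have := g_ub xk (z - xk) (conj Kc c1).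
lra.
Qed.

Variable kap : R.
Hypothesis hk : forall c, C_ell K ell c -> kap^-1 <= dotv c mu.

Lemma step_rate xk z y : is_argmin (subprob_obj K ell F xk) z ->
  (forall c, C_ell K ell c -> dotv c (F y) <= dotv c (F z)) ->
  dotv (z - y) (z - y) <= (1 - kap^-1) * dotv (xk - y) (xk - y).
Proof.
move=> hz hy.
have hps := phi_strong hz y.
have hgl : gfun xk (y - xk) <= subprob_obj K ell F xk z
     - 2^-1 * kap^-1 * dotv (y - xk) (y - xk).
  apply: g_lub => c Cc.
  have Kc := Cc.1; have c1 := Cc.2.
  have h1 := Kc _ (hsc xk y); have h2 := Kc _ (hs xk z).
  rewrite /coneLe !dotvBr !dotvDr !dotvZr c1 mulr1 !enorm_sq in h1 h2.
  have := hk Cc; have := hy c Cc; have := g_ub xk (z - xk) Cc.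
  have q0 := dotv_ge0 (y - xk).
  rewrite phiE; nra.
rewrite (phiE xk y) in hps.
rewrite -(opprB y z) -(opprB y xk) !dotv_opp.
have q0 := dotv_ge0 (y - xk); rewrite mulrBl mul1r; rewrite -mulrA in hgl; lra.
Qed.
End Step.
Lemma dotv_cont (R : realType) (k : nat) (c : 'rV[R]_k) : continuous (dotv c).
Proof.
move=> v; apply/(@cvgrPdist_lt _ _ _ _ (@nbhs_filter _ v)) => e e0.
set B := (S1 c + 1) * (k%:R + 1).
have B0 : 0 < B by rewrite /B mulr_gt0 // ltr_pwDr // ?S1_ge0 // ler0n.
near=> w.
have : ball v (e / B) w by near: w; apply: nbhsx_ballx; rewrite divr_gt0.
rewrite -ball_normE /ball_ /= => hw.
rewrite -dotvBr (le_lt_trans (dotv_S1 _ _)) //.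
apply: (le_lt_trans (ler_wpM2l (S1_ge0 c) (S1_le_norm (v - w)))).
have hn := normr_ge0 (v - w); have hs := S1_ge0 c.
have : `|v - w| * B < e by rewrite -ltr_pdivlMr.
rewrite /B; nra.
Unshelve. all: by end_near.
Qed.

Lemma geo_small (R : realType) (q D eps : R) : 0 <= q < 1 -> 0 <= D -> 0 < eps ->
  exists N, forall k, (N <= k)%N -> q ^+ k * D < eps.
Proof.
move=> /andP[q0 q1] D0 e0.
have hq : `|q| < 1 by rewrite ger0_norm.
have := cvg_expr hq; move/cvgrPdist_lt => /(_ (eps / (D + 1))).
rewrite divr_gt0 ?ltr_pwDr // => /(_ isT) [N _ hN].
exists N => k hk; have := hN k hk; rewrite /= sub0r normrN ger0_norm ?exprn_ge0 //.
rewrite ltr_pdivlMr ?ltr_pwDr // => h.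
have := exprn_ge0 k q0; nra.
Qed.
Theorem lemma4p3 (R : realType) (n m : nat) (K : set 'rV[R]_m)
  (F : 'rV[R]_n -> 'rV[R]_m) (ell mu : 'rV[R]_m) (x : nat -> 'rV[R]_n) :
  closed K -> is_convex_set K -> is_cone K -> is_pointed K ->
  (interior K !=set0) ->
  (forall z, differentiable F z) ->
  interior K ell -> K_smooth K F ell ->
  interior K mu -> strongly_K_convex K F mu ->
  (forall k, is_argmin (subprob_obj K ell F (x k)) (x k.+1)) ->
  (forall k, x k.+1 <> x k) ->
  exists xs : 'rV[R]_n,
    x @ \oo --> xs /\ efficient K F xs /\
    forall k, enorm (x k.+1 - xs)
              <= Num.sqrt (1 - (kappa K ell mu)^-1) * enorm (x k - xs).
Proof.
move=> _ _ _ _ _ hdiff hell hs hmu hsc hx hne.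
have [c0 Cc0] : exists c0, C_ell K ell c0.
  case: (pselect (exists c, C_ell K ell c)) => // nC; exfalso.
  have E : forall xk v, subprob_obj K ell F xk v = 2^-1 * dotv (v - xk) (v - xk).
    move=> xk v; rewrite /subprob_obj enorm_sq.
    have -> : [set dotv c (Jac F xk (v - xk)) | c in C_ell K ell] = set0.
      by apply/seteqP; split => // y [c Cc _]; apply: nC; exists c.
    by rewrite sup0 add0r.
  have := hx 0%N (x 0%N); rewrite !E subrr dotv0r mulr0 => h.
  have h2 : dotv (x 1%N - x 0%N) (x 1%N - x 0%N) = 0.
    by apply/eqP; rewrite eq_le dotv_ge0 andbT; lra.
  by apply: (hne 0%N); apply/eqP; rewrite -subr_eq0; apply/eqP; apply: dotv_eq0.
have [r1 r1p hr1] := interior_bound hell.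
have hM : forall c, C_ell K ell c -> S1 c <= r1^-1.
  move=> c [Kc c1]; have := hr1 c Kc; rewrite c1 => h.
  by rewrite -(ler_pM2l r1p) mulrV // unitfE gt_eqF.
have [r2 r2p hr2] := interior_bound hmu.
set kap := kappa K ell mu.
have Cmu : forall c, C_ell K ell c -> 0 < dotv c mu.
  move=> c [Kc c1]; apply: lt_le_trans (hr2 c Kc); rewrite mulr_gt0 //.
  rewrite lt0r S1_ge0 andbT; apply/eqP => /S1_eq0 c0E.
  by move: c1; rewrite c0E dotv0l => /eqP; rewrite eq_sym oner_eq0.
have hub : has_ubound [set dotv c ell / dotv c mu | c in dual_cone K `\ 0].
  exists (S1 ell / r2) => y [c [Kc c0n] <-].
  have cn0 : c != 0 by apply/eqP.
  have hS : 0 < S1 c.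
    by rewrite lt0r S1_ge0 andbT; apply/eqP => /S1_eq0 /eqP; rewrite (negbTE cn0).
  have hmu' := hr2 c Kc.
  have dmu : 0 < dotv c mu by apply: lt_le_trans hmu'; rewrite mulr_gt0.
  rewrite ler_pdivrMr //.
  have := le_trans (ler_norm _) (dotv_S1 c ell).
  have e2 : S1 ell / r2 * r2 = S1 ell by rewrite divfK // gt_eqF.
  have := S1_ge0 ell; nra.
have hk : forall c, C_ell K ell c -> kap^-1 <= dotv c mu /\ 0 < kap.
  move=> c Cc; have dm := Cmu c Cc.
  have hr : dotv c ell / dotv c mu <= kap.
    rewrite /kap /kappa; apply: (ub_le_sup hub); exists c => //; split; first exact: Cc.1.
    move=> /= c0E; move: Cc.2; rewrite c0E dotv0l => /eqP; rewrite eq_sym oner_eq0.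
    done.
  rewrite Cc.2 mul1r in hr.
  have kp : 0 < kap by apply: lt_le_trans hr; rewrite invr_gt0.
  split => //.
  rewrite -(ler_pM2l kp) mulrV ?unitfE ?gt_eqF //.
  by rewrite -ler_pdivrMr // div1r.
have kp := (hk c0 Cc0).2.
have hk' : forall c, C_ell K ell c -> kap^-1 <= dotv c mu by move=> c /hk [].
set q := Num.sqrt (1 - kap^-1).
have q01 : 0 <= q < 1.
  rewrite sqrtr_ge0 /= -sqrtr1 ltr_sqrt // ltrBlDr ltrDl invr_gt0 //.
have rate : forall k y, (forall c, C_ell K ell c -> dotv c (F y) <= dotv c (F (x k.+1))) ->
    enorm (x k.+1 - y) <= q * enorm (x k - y).
  move=> k y hy.
  have h := step_rate Cc0 hM hs hsc hk' (hx k) hy.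
  rewrite /enorm /q (le_trans (ler_wsqrtr h)) //.
  have [a0|a0] := leP 0 (1 - kap^-1); first by rewrite sqrtrM.
  have : (1 - kap^-1) * dotv (x k - y) (x k - y) <= 0.
    by apply: mulr_le0_ge0; [exact: ltW | exact: dotv_ge0].
  by rewrite -sqrtr_eq0 => /eqP ->; rewrite mulr_ge0 // sqrtr_ge0.
have mono : forall k c, C_ell K ell c -> dotv c (F (x k.+1)) <= dotv c (F (x k)).
  by move=> k c Cc; apply: (step_mono Cc0 hM hs (hx k)).
have monoN : forall i j c, (i <= j)%N -> C_ell K ell c ->
    dotv c (F (x j)) <= dotv c (F (x i)).
  move=> i j c /subnKC <- Cc; elim: (j - i)%N => [|d IH]; first by rewrite addn0.
  by rewrite addnS (le_trans (mono _ _ Cc)).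
have geo : forall y j, (forall c i, C_ell K ell c -> (i <= j)%N -> dotv c (F y) <= dotv c (F (x i))) ->
    forall k, (k <= j)%N -> enorm (x k - y) <= q ^+ k * enorm (x 0%N - y).
  move=> y j hy; elim => [|k IH] hk1; first by rewrite expr0 mul1r.
  apply: le_trans (rate k y (fun c Cc => hy c k.+1 Cc hk1)) _.
  rewrite exprS -mulrA ler_wpM2l ?(andP q01).1 //; exact: IH (ltnW hk1).
have q0 := (andP q01).1; have q1 := (andP q01).2.
set D := enorm (x 0%N - x 1%N) / (1 - q).
have D0 : 0 <= D by rewrite /D divr_ge0 ?enorm_ge0 // subr_ge0 ltW.
have bnd : forall j, enorm (x 0%N - x j) <= D.
  move=> [|jj]; first by rewrite subrr enorm0.
  have h1 := geo (x jj.+1) jj.+1 (fun c i Cc hij => monoN i jj.+1 c hij Cc) 1%N isT.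
  rewrite expr1 in h1.
  have h2 : enorm (x 0%N - x jj.+1) <= enorm (x 0%N - x 1%N) + enorm (x 1%N - x jj.+1).
    by have := enorm_triangle (x 0%N - x 1%N) (x 1%N - x jj.+1); rewrite addrA subrK.
  rewrite /D ler_pdivlMr ?subr_gt0 //; nra.
have cau : forall k j, (k <= j)%N -> enorm (x k - x j) <= q ^+ k * D.
  move=> k j kj; apply: le_trans (geo (x j) j (fun c i Cc hij => monoN i j c hij Cc) k kj) _.
  by rewrite ler_wpM2l ?exprn_ge0.
have hcv : cvg (x @ \oo).
  apply/cauchy_cvgP/cauchy_exP => eps e0.
  have [N hN] := geo_small q01 D0 e0.
  exists (x N); exists N => // k /= Nk.
  rewrite -ball_normE /ball_ /=.
  apply: le_lt_trans (norm_le_enorm _) _; apply: le_lt_trans (cau _ _ Nk) _.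
  exact: hN.
set xs := lim (x @ \oo).
have lim_le : forall c i, C_ell K ell c -> dotv c (F xs) <= dotv c (F (x i)).
  move=> c i Cc.
  have h : (dotv c \o (F \o x)) @ \oo --> dotv c (F xs).
    apply: (cvg_comp (F \o x) (dotv c)); last exact: dotv_cont.
    apply: (cvg_comp x F hcv); exact: (differentiable_continuous (hdiff xs)).
  apply: (cvgr_to_le h); exists i => // k /= ik; exact: monoN.
exists xs; split; first exact: hcv.
split; last by move=> k; apply: rate => c Cc; exact: lim_le.
move=> [x' [hKx' hne']].
have hy : forall c i, C_ell K ell c -> dotv c (F x') <= dotv c (F (x i)).
  move=> c i Cc; apply: le_trans (lim_le c i Cc).
  by have := Cc.1 _ hKx'; rewrite dotvBr subr_ge0.
have cv' : x @ \oo --> x'.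
  apply/cvgrPdist_lt => eps e0.
  have [N hN] := geo_small q01 (enorm_ge0 (x 0%N - x')) e0.
  exists N => // k /= Nk.
  rewrite distrC; apply: le_lt_trans (norm_le_enorm _) _.
  apply: le_lt_trans (geo x' k (fun c i Cc _ => hy c i Cc) k (leqnn k)) _.
  exact: hN.
apply: hne'; congr F; exact: (cvg_unique (@norm_hausdorff _ _) cv' hcv).
Qed.
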